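(* Let $H=(V,E)$ be a (possibly infinite) hypergraph and let $(V_1,E_1)$ and $(V_2,E_2)$ be subhypergraphs of $H$ (so each hyperedge in $E_i$ is a subset of $V_i$) with $V_1\cup V_2=V$, $V_1\cap V_2=\{v\}$ for a single vertex $v$, and $E=E_1\cup E_2$. In the maker–breaker game in which maker moves first, maker can win on $(V,E)$ if and only if at least one of the following holds: (1) maker can win the maker–breaker game on $(V_1,E_1)$; (2) maker can win the maker–breaker game on $(V_2,E_2)$; (3) for both $i=1$ and $i=2$, maker can win the game on $(V_i,E_i)$ started from the position in which $v$ is already colored with maker's color and maker makes the next move.
   Context: The maker–breaker game on a hypergraph $(V,E)$: two players, maker and breaker, alternately color one previously uncolored vertex with their own color (here maker moves first unless a different starting position is specified). Maker wins if at some finite stage all vertices of some hyperedge are maker-colored; breaker wins otherwise. ''Maker can win'' means maker has a strategy guaranteeing a win regardless of breaker's play. *)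

(* Defs.v *)
(* Vertices live in a type V; a game is given by a vertex set Vs : V -> Prop,
   a set of hyperedges Es : (V -> Prop) -> Prop, and an initial set M0 of
   maker-colored vertices; maker moves next.  A history h : list V lists the
   moves made so far, in order; moves at even positions are maker's. *)
From Stdlib Require Import List Arith.
Import ListNotations.
Set Implicit Arguments.

Section Game.
Variable V : Type.

Definition legal (Vs M0 : V -> Prop) (h : list V) : Prop :=
  forall k x, nth_error h k = Some x ->
    Vs x /\ ~ M0 x /\ ~ In x (firstn k h).

Definition maker_colored (M0 : V -> Prop) (h : list V) (x : V) : Prop :=
  M0 x \/ exists k, Nat.Even k /\ nth_error h k = Some x.

Definition maker_won (Es : (V -> Prop) -> Prop) (M0 : V -> Prop) (h : list V) : Prop :=
  exists e, Es e /\ forall x, e x -> maker_colored M0 h x.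

Definition board_full (Vs M0 : V -> Prop) (h : list V) : Prop :=
  forall x, Vs x -> M0 x \/ In x h.

Definition strategy := list V -> option V.

Definition consistent (sigma : strategy) (h : list V) : Prop :=
  forall k x, Nat.Even k -> nth_error h k = Some x -> sigma (firstn k h) = Some x.

Definition prefix (f : nat -> V) (n : nat) : list V := map f (seq 0 n).

(* Breaker's moves are arbitrary legal moves. *)
Definition winning_strategy (Vs : V -> Prop) (Es : (V -> Prop) -> Prop)
    (M0 : V -> Prop) (sigma : strategy) : Prop :=
  (forall h, legal Vs M0 h -> consistent sigma h -> Nat.Even (length h) ->
     ~ board_full Vs M0 h ->
     exists x, sigma h = Some x /\ legal Vs M0 (h ++ [x])) /\
  (forall h, legal Vs M0 h -> consistent sigma h -> board_full Vs M0 h ->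
     maker_won Es M0 h) /\
  (forall f : nat -> V,
     (forall n, legal Vs M0 (prefix f n) /\ consistent sigma (prefix f n)) ->
     exists n, maker_won Es M0 (prefix f n)).

Definition maker_can_win (Vs : V -> Prop) (Es : (V -> Prop) -> Prop)
    (M0 : V -> Prop) : Prop :=
  exists sigma, winning_strategy Vs Es M0 sigma.

End Game.

(* Main.v *)
Require Import Defs.
From Stdlib Require Import List Arith Lia Classical ClassicalEpsilon.
Import ListNotations.

Set Implicit Arguments.
Section Core.
Variable V : Type.

Definition add (P : V -> Prop) (x : V) : V -> Prop := fun z => P z \/ z = x.
Definition freeV (Vs M B : V -> Prop) (x : V) := Vs x /\ ~ M x /\ ~ B x.
Definition wonE (Es : (V -> Prop) -> Prop) (M : V -> Prop) :=
  exists e, Es e /\ forall x, e x -> M x.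

Inductive WinI (Vs : V -> Prop) (Es : (V -> Prop) -> Prop) :
  (V -> Prop) -> (V -> Prop) -> bool -> Prop :=
| Wwon M B t : wonE Es M -> WinI Vs Es M B t
| Wmak M B x : freeV Vs M B x -> WinI Vs Es (add M x) B false -> WinI Vs Es M B true
| Wbrk M B : (exists y, freeV Vs M B y) ->
    (forall y, freeV Vs M B y -> WinI Vs Es M (add B y) true) -> WinI Vs Es M B false.

Lemma full_won Vs Es M B t : WinI Vs Es M B t -> (forall x, ~ freeV Vs M B x) -> wonE Es M.
Proof.
  intros W; induction W; intros F; auto.
  - exfalso; eapply F; eauto.
  - destruct H as [y Hy]; exfalso; eapply F; eauto.
Qed.

Lemma sub_board Vs1 Es1 Vs Es
  (hV : forall x, Vs1 x -> Vs x) (hEs : forall e, Es1 e -> Es e)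
  (hin : forall e, Es1 e -> forall x, e x -> Vs1 x) M B t :
  WinI Vs1 Es1 M B t -> forall M' B',
  (forall z, Vs1 z -> M z -> M' z) -> (forall z, Vs1 z -> B' z -> B z) ->
  WinI Vs Es M' B' t /\ (t = false -> WinI Vs Es M' B' true).
Proof.
  intros W; induction W as [M B t Hw|M B x Hf W IH|M B Hex Hall IH];
    intros M' B' HM HB.
  - assert (wonE Es M').
    { destruct Hw as [e [He Hx]]; exists e; split; auto.
      intros x ex; apply HM; eauto. }
    split; [constructor; auto|intros; constructor; auto].
  - split; [|discriminate].
    destruct (classic (M' x)) as [Hx|Hx].
    + refine (proj2 (IH M' B' _ _) eq_refl); auto.
      intros z Hz [Hz2| ->]; auto.
    + destruct Hf as [H1 [H2 H3]].
      apply Wmak with x.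
      * split; [auto|split; [auto|]].
        intro Hb; apply H3; auto.
      * refine (proj1 (IH (add M' x) B' _ _)); auto.
        intros z Hz [Hz2| ->]; [left; auto|right; auto].
  - destruct Hex as [y0 Hy0].
    assert (T : WinI Vs Es M' B' true).
    { refine (proj1 (IH y0 Hy0 M' B' _ _)); auto. intros z Hz Hb; left; auto. }
    split; [|intros; exact T].
    destruct (classic (exists z, freeV Vs M' B' z)) as [Hz|Hz].
    + apply Wbrk; auto.
      intros z Fz.
      destruct (classic (freeV Vs1 M B z)) as [F1|F1].
      * refine (proj1 (IH z F1 M' (add B' z) _ _)); auto.
        intros w Hw [Hb| ->]; [left; auto|right; auto].
      * refine (proj1 (IH y0 Hy0 M' (add B' z) _ _)); auto.
        intros w Hw [Hb| ->]; [left; auto|].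
        left. destruct Fz as [_ [Fz1 Fz2]].
        apply NNPP; intro Bz; apply F1; split; [auto|split; auto].
    + apply Wwon. eapply full_won; [exact T|].
      intros x Fx; apply Hz; eauto.
Qed.

Lemma mono Vs Es (hin : forall e, Es e -> forall x, e x -> Vs x) M B t M' B' :
  WinI Vs Es M B t ->
  (forall z, Vs z -> M z -> M' z) -> (forall z, Vs z -> B' z -> B z) ->
  WinI Vs Es M' B' t.
Proof.
  intros W HM HB. exact (proj1 (@sub_board Vs Es Vs Es (fun x h => h) (fun e h => h) hin _ _ _ W M' B' HM HB)).
Qed.

Lemma breaker_step Vs Es M B :
  ~ WinI Vs Es M B false -> (exists y, freeV Vs M B y) ->
  exists y, freeV Vs M B y /\ ~ WinI Vs Es M (add B y) true.
Proof.
  intros N Ex. apply NNPP; intro C; apply N; apply Wbrk; auto.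
  intros y Fy; apply NNPP; intro C2; apply C; eauto.
Qed.

Lemma breaker_step2 Vs Es M B :
  ~ WinI Vs Es M B false ->
  (exists y, freeV Vs M B y /\ ~ WinI Vs Es M (add B y) true) \/ ~ WinI Vs Es M B true.
Proof.
  intros N. destruct (classic (exists y, freeV Vs M B y)) as [Ex|Nex].
  - left; apply breaker_step; auto.
  - right; intro W; apply N; apply Wwon; eapply full_won; [exact W|].
    intros x Fx; apply Nex; eauto.
Qed.

End Core.
Set Implicit Arguments.

Section Corr.
Variable V : Type.
Variable Vs : V -> Prop.
Variable Es : (V -> Prop) -> Prop.
Variable M0 : V -> Prop.

Definition MH (h : list V) : V -> Prop := maker_colored M0 h.
Definition BH (h : list V) : V -> Prop :=
  fun z => exists k, Nat.Odd k /\ nth_error h k = Some z.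

Lemma nth_snoc (h : list V) x k z :
  nth_error (h ++ [x]) k = Some z <-> nth_error h k = Some z \/ (k = length h /\ z = x).
Proof.
  destruct (lt_eq_lt_dec k (length h)) as [[Hlt|Heq]|Hgt].
  - rewrite nth_error_app1 by exact Hlt. split; [auto|].
    intros [H|[H _]]; [auto|lia].
  - subst k. rewrite nth_error_app2 by lia. rewrite Nat.sub_diag. simpl.
    split.
    + intros H; injection H; intros; right; auto.
    + intros [H|[_ H]]; [|subst; auto].
      assert (nth_error h (length h) = None) by (apply nth_error_None; lia). congruence.
  - rewrite nth_error_app2 by lia.
    assert (nth_error h k = None) by (apply nth_error_None; lia).
    destruct (k - length h) eqn:E; [lia|]. simpl. rewrite nth_error_nil.
    split; [discriminate|]. intros [H1|[H1 _]]; [congruence|lia].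
Qed.

Lemma MH_snoc h x z : MH (h ++ [x]) z <-> MH h z \/ (Nat.Even (length h) /\ z = x).
Proof.
  unfold MH, maker_colored. split.
  - intros [H|[k [Ek Hk]]]; [left; left; auto|].
    apply nth_snoc in Hk. destruct Hk as [Hk|[-> ->]].
    + left; right; eauto.
    + right; auto.
  - intros [[H|[k [Ek Hk]]]|[E ->]]; [left; auto| |].
    + right; exists k; split; auto; apply nth_snoc; auto.
    + right; exists (length h); split; auto; apply nth_snoc; auto.
Qed.

Lemma BH_snoc h x z : BH (h ++ [x]) z <-> BH h z \/ (Nat.Odd (length h) /\ z = x).
Proof.
  unfold BH. split.
  - intros [k [Ek Hk]].
    apply nth_snoc in Hk. destruct Hk as [Hk|[-> ->]].
    + left; eauto.
    + right; auto.
  - intros [[k [Ek Hk]]|[E ->]].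
    + exists k; split; auto; apply nth_snoc; auto.
    + exists (length h); split; auto; apply nth_snoc; auto.
Qed.

Lemma In_iff (h : list V) z : In z h <-> (exists k, Nat.Even k /\ nth_error h k = Some z)
   \/ BH h z.
Proof.
  split.
  - intros Hi. apply In_nth_error in Hi. destruct Hi as [k Hk].
    destruct (Nat.Even_or_Odd k); [left|right]; exists k; auto.
  - intros [[k [_ Hk]]|[k [_ Hk]]]; eapply nth_error_In; eauto.
Qed.

Lemma firstn_snoc_le (h : list V) x k : k <= length h -> firstn k (h ++ [x]) = firstn k h.
Proof.
  intros Hk. rewrite firstn_app.
  replace (k - length h) with 0 by lia. simpl. apply app_nil_r.
Qed.

Lemma legal_snoc h x :
  legal Vs M0 (h ++ [x]) <-> legal Vs M0 h /\ freeV Vs (MH h) (BH h) x.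
Proof.
  split.
  - intros L. split.
    + intros k z Hk.
      assert (k < length h) by (apply nth_error_Some; congruence).
      destruct (L k z) as [A [B C]]; [apply nth_snoc; auto|].
      rewrite firstn_snoc_le in C by lia. auto.
    + destruct (L (length h) x) as [A [B C]]; [apply nth_snoc; auto|].
      rewrite firstn_snoc_le in C by lia. rewrite firstn_all in C.
      split; [auto|split].
      * intros [H|H]; [auto|]. apply C; apply In_iff; auto.
      * intros H; apply C; apply In_iff; auto.
  - intros [L [A [B C]]] k z Hk. apply nth_snoc in Hk.
    destruct Hk as [Hk|[-> ->]].
    + assert (k < length h) by (apply nth_error_Some; congruence).
      rewrite firstn_snoc_le by lia. auto.
    + rewrite firstn_snoc_le by lia. rewrite firstn_all.
      split; [auto|split].
      * intro H; apply B; left; auto.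
      * intro H; apply In_iff in H; destruct H as [H|H]; [apply B; right; auto|auto].
Qed.

Lemma consistent_snoc (s : strategy V) h x :
  consistent s (h ++ [x]) <-> consistent s h /\ (Nat.Even (length h) -> s h = Some x).
Proof.
  split.
  - intros C. split.
    + intros k z Ek Hk.
      assert (k < length h) by (apply nth_error_Some; congruence).
      rewrite <- (firstn_snoc_le h x) by lia. apply C; auto. apply nth_snoc; auto.
    + intros E. rewrite <- (firstn_all h). rewrite <- (firstn_snoc_le h x) by lia.
      apply C; auto. apply nth_snoc; auto.
  - intros [C Hs] k z Ek Hk. apply nth_snoc in Hk. destruct Hk as [Hk|[-> ->]].
    + assert (k < length h) by (apply nth_error_Some; congruence).
      rewrite firstn_snoc_le by lia. auto.
    + rewrite firstn_snoc_le by lia. rewrite firstn_all. auto.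
Qed.

Lemma full_iff h : board_full Vs M0 h <-> forall x, ~ freeV Vs (MH h) (BH h) x.
Proof.
  split.
  - intros F x [A [B C]]. destruct (F x A) as [H|H].
    + apply B; left; auto.
    + apply In_iff in H. destruct H as [H|H]; [apply B; right; auto|auto].
  - intros F x A. apply NNPP; intro N. apply (F x). split; [auto|split].
    + intros [H|H]; apply N; [left; auto|right; apply In_iff; auto].
    + intros H; apply N; right; apply In_iff; auto.
Qed.

Lemma even_snoc (h : list V) x : Nat.even (length (h ++ [x])) = negb (Nat.even (length h)).
Proof.
  rewrite length_app. simpl. rewrite Nat.add_1_r, Nat.even_succ, <- Nat.negb_even. auto.
Qed.

Lemma Even_bool n : Nat.Even n <-> Nat.even n = true.
Proof. symmetry; apply Nat.even_spec. Qed.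

Lemma Odd_bool n : Nat.Odd n <-> Nat.even n = false.
Proof.
  rewrite <- Nat.odd_spec, <- Nat.negb_even. destruct (Nat.even n); simpl; split; congruence.
Qed.

End Corr.
Set Implicit Arguments.

Section Strat.
Variable V : Type.
Variable Vs : V -> Prop.
Variable Es : (V -> Prop) -> Prop.
Variable M0 : V -> Prop.

Inductive tree := Leaf | Node (x : V) (t : tree) | BNode (k : V -> tree).

Fixpoint good (M B : V -> Prop) (t : bool) (tr : tree) : Prop :=
  match tr with
  | Leaf => wonE Es M
  | Node x tr' => t = true /\ freeV Vs M B x /\ good (add M x) B false tr'
  | BNode k => t = false /\ (exists y, freeV Vs M B y) /\
      forall y, freeV Vs M B y -> good M (add B y) true (k y)
  end.

Lemma win_tree M B t : WinI Vs Es M B t -> exists tr, good M B t tr.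
Proof.
  intros W; induction W as [M B t Hw|M B x Hf W IH|M B Hex Hall IH].
  - exists Leaf; exact Hw.
  - destruct IH as [tr Htr]. exists (Node x tr); simpl; auto.
  - exists (BNode (fun y => epsilon (inhabits Leaf) (fun tr => good M (add B y) true tr))).
    simpl; split; [auto|split; [auto|]].
    intros y Fy. apply (epsilon_spec (inhabits Leaf) (fun tr => good M (add B y) true tr)).
    apply IH; auto.
Qed.

Lemma wonE_mono M M' : (forall z, M z -> M' z) -> wonE Es M -> wonE Es M'.
Proof. intros HM [e [He Hx]]; exists e; split; auto. Qed.
Lemma wonE_ext M M' : (forall z, M z <-> M' z) -> wonE Es M -> wonE Es M'.
Proof. intros HM; apply wonE_mono; intros z; apply HM. Qed.

Lemma freeV_ext M B M' B' x : (forall z, M z <-> M' z) -> (forall z, B z <-> B' z) ->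
  freeV Vs M B x -> freeV Vs M' B' x.
Proof. intros HM HB [A [C D]]; split; [auto|split]; [rewrite <- HM|rewrite <- HB]; auto. Qed.

Lemma add_ext (M M' : V -> Prop) x : (forall z, M z <-> M' z) -> forall z, add M x z <-> add M' x z.
Proof. intros HM z; unfold add; rewrite HM; tauto. Qed.

Lemma good_ext tr : forall M B t M' B', (forall z, M z <-> M' z) -> (forall z, B z <-> B' z) ->
  good M B t tr -> good M' B' t tr.
Proof.
  induction tr as [|x tr IH|k IH]; intros M B t M' B' HM HB G; simpl in *.
  - eapply wonE_ext; eauto.
  - destruct G as [G1 [G2 G3]]; split; [auto|split].
    + eapply freeV_ext; eauto.
    + eapply IH; [| |exact G3]; auto. apply add_ext; auto.
  - destruct G as [G1 [[y0 G2] G3]]; split; [auto|split].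
    + exists y0; eapply freeV_ext; eauto.
    + intros y Fy. eapply IH; [| |apply G3]; auto.
      * apply add_ext; auto.
      * eapply freeV_ext; [| |exact Fy]; intro; symmetry; auto.
Qed.

Lemma WinI_ext M B t M' B' : WinI Vs Es M B t ->
  (forall z, M z <-> M' z) -> (forall z, B z <-> B' z) -> WinI Vs Es M' B' t.
Proof.
  intros W; revert M' B'; induction W as [M B t Hw|M B x Hf W IH|M B Hex Hall IH];
    intros M' B' HM HB.
  - apply Wwon; eapply wonE_ext; eauto.
  - apply Wmak with x; [eapply freeV_ext; eauto|]. apply IH; auto. apply add_ext; auto.
  - apply Wbrk.
    + destruct Hex as [y Hy]; exists y; eapply freeV_ext; eauto.
    + intros y Fy. apply (IH y).
      * eapply freeV_ext; [| |exact Fy]; intro; symmetry; auto.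
      * auto.
      * apply add_ext; auto.
Qed.

Definition step (tr : tree) (x : V) : tree :=
  match tr with Leaf => Leaf | Node _ t => t | BNode k => k x end.
Definition walk (tr : tree) (h : list V) : tree := fold_left step h tr.

Lemma walk_snoc tr h x : walk tr (h ++ [x]) = step (walk tr h) x.
Proof. unfold walk; rewrite fold_left_app; reflexivity. Qed.

Definition fallback (h : list V) : option V :=
  match excluded_middle_informative (exists x, freeV Vs (MH M0 h) (BH h) x) with
  | left e => Some (proj1_sig (constructive_indefinite_description _ e))
  | right _ => None
  end.

Definition strat (tr0 : tree) (h : list V) : option V :=
  match walk tr0 h with Node x _ => Some x | _ => fallback h end.

Lemma fallback_spec h : (exists x, freeV Vs (MH M0 h) (BH h) x) ->
  exists x, fallback h = Some x /\ freeV Vs (MH M0 h) (BH h) x.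
Proof.
  intros Ex. unfold fallback. destruct (excluded_middle_informative _) as [e|n]; [|contradiction].
  eexists; split; [reflexivity|]. apply (proj2_sig (constructive_indefinite_description _ e)).
Qed.

Lemma MH_nil z : M0 z <-> MH M0 [] z.
Proof.
  unfold MH, maker_colored. split; [auto|].
  intros [H|[k [_ Hk]]]; auto. rewrite nth_error_nil in Hk; discriminate.
Qed.

Lemma BH_nil z : False <-> BH ([] : list V) z.
Proof.
  unfold BH. split; [tauto|]. intros [k [_ Hk]]; rewrite nth_error_nil in Hk; discriminate.
Qed.

Lemma inv tr0 : good M0 (fun _ => False) true tr0 -> forall h,
  legal Vs M0 h -> consistent (strat tr0) h ->
  good (MH M0 h) (BH h) (Nat.even (length h)) (walk tr0 h).
Proof.
  intros G0 h. induction h as [|x h IH] using rev_ind; intros L C.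
  - simpl. eapply good_ext; [| |exact G0]; [apply MH_nil|apply BH_nil].
  - apply legal_snoc in L; destruct L as [L Fx].
    apply consistent_snoc in C; destruct C as [C Cs].
    specialize (IH L C). rewrite walk_snoc, even_snoc.
    destruct (walk tr0 h) as [|y t|k] eqn:Hw; simpl in IH |- *.
    + eapply wonE_mono; [|exact IH]. intros z Hz; apply MH_snoc; auto.
    + destruct IH as [E [Fy G]]. rewrite E; simpl.
      assert (y = x).
      { assert (Ev : Nat.Even (length h)) by (apply Even_bool; auto).
        specialize (Cs Ev). unfold strat in Cs. rewrite Hw in Cs. congruence. }
      subst y. eapply good_ext; [| |exact G].
      * intros z. rewrite MH_snoc. unfold add.
        assert (Nat.Even (length h)) by (apply Even_bool; auto). tauto.
      * intros z. rewrite BH_snoc.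
        assert (~ Nat.Odd (length h)) by (rewrite Odd_bool; congruence). tauto.
    + destruct IH as [E [_ G]]. rewrite E; simpl.
      eapply good_ext; [| |apply G; exact Fx].
      * intros z. rewrite MH_snoc.
        assert (~ Nat.Even (length h)) by (rewrite Even_bool; congruence). tauto.
      * intros z. rewrite BH_snoc. unfold add.
        assert (Nat.Odd (length h)) by (apply Odd_bool; auto). tauto.
Qed.

Lemma prefix_S (f : nat -> V) n : prefix f (S n) = prefix f n ++ [f n].
Proof. unfold prefix. rewrite seq_S, map_app. reflexivity. Qed.

Lemma win_can : WinI Vs Es M0 (fun _ => False) true -> maker_can_win Vs Es M0.
Proof.
  intros W. destruct (win_tree W) as [tr0 G0].
  exists (strat tr0). split; [|split].
  - intros h L C E NF. pose proof (inv G0 L C) as I.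
    rewrite (proj1 (Even_bool _) E) in I.
    assert (Ex : exists x, freeV Vs (MH M0 h) (BH h) x).
    { apply NNPP; intro N; apply NF; apply full_iff; intros x Fx; apply N; eauto. }
    unfold strat. destruct (walk tr0 h) as [|y t|k]; simpl in I.
    + destruct (fallback_spec Ex) as [x [Hx Fx]]. exists x; split; auto.
      apply legal_snoc; auto.
    + exists y; split; auto. apply legal_snoc; split; auto; apply I.
    + destruct I; discriminate.
  - intros h L C F. pose proof (inv G0 L C) as I.
    rewrite full_iff in F.
    destruct (walk tr0 h) as [|y t|k]; simpl in I.
    + exact I.
    + exfalso; apply (F y); apply I.
    + exfalso; destruct I as [_ [[y Hy] _]]; apply (F y); auto.
  - intros f Hf.
    assert (K : forall tr n, walk tr0 (prefix f n) = tr -> exists m, maker_won Es M0 (prefix f m)).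
    { induction tr as [|x t IHt|k IHk]; intros n Hw.
      - destruct (Hf n) as [L C]. pose proof (inv G0 L C) as I.
        rewrite Hw in I. exists n; exact I.
      - apply (IHt (S n)). rewrite prefix_S, walk_snoc, Hw. reflexivity.
      - apply (IHk (f n) (S n)). rewrite prefix_S, walk_snoc, Hw. reflexivity. }
    apply (K _ 0 eq_refl).
Qed.

Lemma can_win_Win (d : V) : maker_can_win Vs Es M0 -> WinI Vs Es M0 (fun _ => False) true.
Proof.
  intros [s [C1 [C2 C3]]]. apply NNPP; intro NW.
  set (P := fun h => legal Vs M0 h /\ consistent s h /\ ~ WinI Vs Es (MH M0 h) (BH h) (Nat.even (length h))).
  assert (Step : forall h, P h -> ~ board_full Vs M0 h -> exists x, P (h ++ [x])).
  { intros h [L [C N]] NF. destruct (Nat.even (length h)) eqn:E.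
    - destruct (C1 h L C (proj2 (Even_bool _) E) NF) as [x [Hs Lx]].
      exists x. split; [auto|split].
      + apply consistent_snoc; auto.
      + rewrite even_snoc, E; simpl. intro W. apply N.
        apply legal_snoc in Lx. apply Wmak with x; [apply Lx|].
        eapply WinI_ext; [exact W| |].
        * intros z; rewrite MH_snoc; unfold add.
          assert (Nat.Even (length h)) by (apply Even_bool; auto). tauto.
        * intros z; rewrite BH_snoc.
          assert (~ Nat.Odd (length h)) by (rewrite Odd_bool; congruence). tauto.
    - assert (Ex : exists x, freeV Vs (MH M0 h) (BH h) x).
      { apply NNPP; intro N2; apply NF; apply full_iff; intros x Fx; apply N2; eauto. }
      destruct (breaker_step N Ex) as [y [Fy Ny]].
      exists y. split; [apply legal_snoc; auto|split].
      + apply consistent_snoc; split; auto. intros Ev; apply Even_bool in Ev; congruence.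
      + rewrite even_snoc, E; simpl. intro W. apply Ny.
        eapply WinI_ext; [exact W| |].
        * intros z; rewrite MH_snoc.
          assert (~ Nat.Even (length h)) by (rewrite Even_bool; congruence). tauto.
        * intros z; rewrite BH_snoc; unfold add.
          assert (Nat.Odd (length h)) by (apply Odd_bool; auto). tauto. }
  set (nextH := fun h => match excluded_middle_informative (exists x, P (h ++ [x])) with
        | left e => h ++ [proj1_sig (constructive_indefinite_description _ e)]
        | right _ => h end).
  set (hs := fun n => Nat.iter n nextH []).
  assert (Phs : forall n, P (hs n)).
  { induction n as [|n IHn].
    - simpl. split; [|split].
      + intros k z Hk; rewrite nth_error_nil in Hk; discriminate.
      + intros k z _ Hk; rewrite nth_error_nil in Hk; discriminate.
      + simpl. intro W; apply NW. eapply WinI_ext; [exact W| |].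
        * intros z; rewrite <- MH_nil; tauto.
        * intros z; rewrite <- BH_nil; tauto.
    - change (hs (S n)) with (nextH (hs n)). unfold nextH.
      destruct (excluded_middle_informative _) as [e|_]; [|auto].
      apply (proj2_sig (constructive_indefinite_description _ e)). }
  destruct (classic (exists n, board_full Vs M0 (hs n))) as [[n F]|NF].
  - destruct (Phs n) as [L [C N]]. apply N. apply Wwon. exact (C2 _ L C F).
  - assert (Ext : forall n, exists x, hs (S n) = hs n ++ [x]).
    { intros n. change (hs (S n)) with (nextH (hs n)). unfold nextH.
      destruct (excluded_middle_informative _) as [e|ne]; [eauto|].
      exfalso; apply ne; apply Step; [apply Phs|]. intro F; apply NF; eauto. }
    assert (Len : forall n, length (hs n) = n).
    { induction n as [|n IHn]; [reflexivity|].
      destruct (Ext n) as [x Hx]. rewrite Hx, length_app, IHn; simpl; lia. }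
    set (f := fun n => nth n (hs (S n)) d).
    assert (Pre : forall n, prefix f n = hs n).
    { induction n as [|n IHn]; [reflexivity|].
      rewrite prefix_S, IHn. destruct (Ext n) as [x Hx]. rewrite Hx.
      f_equal. unfold f. rewrite Hx, app_nth2 by (rewrite Len; lia).
      rewrite Len, Nat.sub_diag. reflexivity. }
    destruct (C3 f) as [n Hn].
    + intros n; rewrite Pre; destruct (Phs n) as [L [C _]]; auto.
    + rewrite Pre in Hn. destruct (Phs n) as [_ [_ N]]. apply N, Wwon. exact Hn.
Qed.

End Strat.
Set Implicit Arguments.

Section Key.
Variable V : Type.
Variables (E : (V -> Prop) -> Prop) (V1 V2 : V -> Prop) (E1 E2 : (V -> Prop) -> Prop) (v : V).
Hypothesis hE1 : forall e, E1 e -> forall x, e x -> V1 x.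
Hypothesis hE2 : forall e, E2 e -> forall x, e x -> V2 x.
Hypothesis hcover : forall x, V1 x \/ V2 x.
Hypothesis hcap : forall x, (V1 x /\ V2 x) <-> x = v.
Hypothesis hEH : forall e, E e -> E1 e \/ E2 e.

Definition W1 := WinI V1 E1.
Definition W2 := WinI V2 E2.
Definition WH := WinI (fun _ : V => True) E.

Definition Inv (M B : V -> Prop) (t : bool) : Prop :=
  if t then ~ W1 (add M v) B true /\ ~ W2 M B true
  else (~ W1 (add M v) B false /\ ~ W2 M B true) \/
       (~ W1 (add M v) B true /\ ~ W2 M B false).

Lemma m1 M B t M' B' : ~ W1 M B t -> (forall z, V1 z -> M' z -> M z) ->
  (forall z, V1 z -> B z -> B' z) -> ~ W1 M' B' t.
Proof. intros N HM HB W; apply N; eapply mono; eauto. Qed.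

Lemma m2 M B t M' B' : ~ W2 M B t -> (forall z, V2 z -> M' z -> M z) ->
  (forall z, V2 z -> B z -> B' z) -> ~ W2 M' B' t.
Proof. intros N HM HB W; apply N; eapply mono; eauto. Qed.

Lemma key M B t : WH M B t -> Inv M B t -> False.
Proof.
  intros W; induction W as [M B t Hw|M B x Hf W IH|M B Hex Hall IH]; intros I.
  - assert (X : exists t1 t2, ~ W1 (add M v) B t1 /\ ~ W2 M B t2).
    { destruct t; simpl in I.
      - exists true, true; auto.
      - destruct I as [[A C]|[A C]]; eauto. }
    destruct X as [t1 [t2 [N1 N2]]].
    destruct Hw as [e [He Hx]]. destruct (hEH He) as [H1|H2].
    + apply N1. apply Wwon. exists e; split; auto. intros z ez; left; auto.
    + apply N2. apply Wwon. exists e; split; auto.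
  - apply IH. simpl in I |- *. destruct I as [N1 N2].
    destruct Hf as [_ [Mx Bx]].
    destruct (classic (x = v)) as [->|Hxv].
    + right. split.
      * eapply m1; [exact N1| |]; [|auto].
        intros z _ [[Hz| ->]| ->]; [left; auto|right; auto|right; auto].
      * intro W2'. apply N2. apply Wmak with v; [|exact W2'].
        split; [apply hcap; auto|split; auto].
    + destruct (classic (V1 x)) as [V1x|NV1x].
      * left. split.
        -- intro W1'. apply N1. apply Wmak with x.
           ++ split; [auto|split; [|auto]]. intros [A| A]; auto.
           ++ eapply mono; [exact hE1|exact W1'| |]; [|auto].
              intros z _ [[A| ->]| ->]; unfold add; tauto.
        -- eapply m2; [exact N2| |]; [|auto].
           intros z V2z [A| ->]; [auto|]. exfalso; apply Hxv; apply hcap; auto.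
      * assert (V2x : V2 x) by (destruct (hcover x); tauto).
        right. split.
        -- eapply m1; [exact N1| |]; [|auto].
           intros z V1z [[A| ->]| ->]; [left; auto|contradiction|right; auto].
        -- intro W2'. apply N2. apply Wmak with x; [|exact W2'].
           split; [auto|split; auto].
  - destruct Hex as [y0 Hy0]. simpl in I.
    destruct I as [[N1 N2]|[N1 N2]].
    + destruct (breaker_step2 N1) as [[y [Fy Ny]]|N1'].
      * apply (IH y).
        -- destruct Fy as [_ [A C]]. split; [auto|split; [|auto]]. intro; apply A; left; auto.
        -- simpl. split; [auto|]. eapply m2; [exact N2| |]; [auto|].
           intros z _ Bz; left; auto.
      * apply (IH y0 Hy0). simpl. split.
        -- eapply m1; [exact N1'| |]; [auto|]. intros z _ Bz; left; auto.
        -- eapply m2; [exact N2| |]; [auto|]. intros z _ Bz; left; auto.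
    + destruct (breaker_step2 N2) as [[y [Fy Ny]]|N2'].
      * apply (IH y).
        -- destruct Fy as [_ [A C]]. split; [auto|split; auto].
        -- simpl. split; [|auto]. eapply m1; [exact N1| |]; [auto|].
           intros z _ Bz; left; auto.
      * apply (IH y0 Hy0). simpl. split.
        -- eapply m1; [exact N1| |]; [auto|]. intros z _ Bz; left; auto.
        -- eapply m2; [exact N2'| |]; [auto|]. intros z _ Bz; left; auto.
Qed.

End Key.

Theorem theorem5 (V : Type) (E : (V -> Prop) -> Prop)
    (V1 V2 : V -> Prop) (E1 E2 : (V -> Prop) -> Prop) (v : V)
    (hE1 : forall e, E1 e -> forall x, e x -> V1 x)
    (hE2 : forall e, E2 e -> forall x, e x -> V2 x)
    (hcover : forall x, V1 x \/ V2 x)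
    (hcap : forall x, (V1 x /\ V2 x) <-> x = v)
    (hE : forall e, E e <-> (E1 e \/ E2 e)) :
  maker_can_win (fun _ => True) E (fun _ => False) <->
  (maker_can_win V1 E1 (fun _ => False) \/
   maker_can_win V2 E2 (fun _ => False) \/
   (maker_can_win V1 E1 (fun x => x = v) /\
    maker_can_win V2 E2 (fun x => x = v))).
Proof.
  assert (hEH : forall e, E e -> E1 e \/ E2 e) by (intros e; apply hE).
  assert (hEH' : forall e, E e -> E2 e \/ E1 e) by (intros e He; apply hE in He; tauto).
  assert (hcover' : forall x, V2 x \/ V1 x) by (intros x; destruct (hcover x); auto).
  assert (hcap' : forall x, (V2 x /\ V1 x) <-> x = v) by (intros x; rewrite <- hcap; tauto).
  split.
  - intros HW. apply (can_win_Win v) in HW.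
    assert (A : WinI V1 E1 (fun x => x = v) (fun _ => False) true \/
                WinI V2 E2 (fun _ => False) (fun _ => False) true).
    { apply NNPP; intro N.
      apply (key V1 V2 E1 E2 hE1 hE2 hcover hcap hEH HW). simpl. split.
      - intro W; apply N; left. eapply mono; [exact hE1|exact W| |]; [|auto].
        intros z _ [[]| ->]; auto.
      - intro W; apply N; right; exact W. }
    assert (B : WinI V2 E2 (fun x => x = v) (fun _ => False) true \/
                WinI V1 E1 (fun _ => False) (fun _ => False) true).
    { apply NNPP; intro N.
      apply (key V2 V1 E2 E1 hE2 hE1 hcover' hcap' hEH' HW). simpl. split.
      - intro W; apply N; left. eapply mono; [exact hE2|exact W| |]; [|auto].
        intros z _ [[]| ->]; auto.
      - intro W; apply N; right; exact W. }
    destruct B as [B|B]; [|left; apply win_can; exact B].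
    destruct A as [A|A]; [|right; left; apply win_can; exact A].
    right; right; split; apply win_can; auto.
  - intros [H1|[H2|[H1 H2]]].
    + apply (can_win_Win v) in H1. apply win_can.
      refine (proj1 (sub_board (fun _ : V => True) E (fun _ _ => I) _ hE1 H1 _ _ _ _)).
      * intros e He; apply hE; auto.
      * auto.
      * auto.
    + apply (can_win_Win v) in H2. apply win_can.
      refine (proj1 (sub_board (fun _ : V => True) E (fun _ _ => I) _ hE2 H2 _ _ _ _)).
      * intros e He; apply hE; auto.
      * auto.
      * auto.
    + apply (can_win_Win v) in H1. apply (can_win_Win v) in H2. apply win_can.
      assert (T1 : forall B', (forall z, V1 z -> B' z -> False) ->
                WinI (fun _ => True) E (add (fun _ => False) v) B' true).
      { intros B' HB. refine (proj1 (sub_board (fun _ : V => True) E (fun _ _ => I) _ hE1 H1 _ _ _ _)).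
        - intros e He; apply hE; auto.
        - intros z _ ->; right; auto.
        - exact HB. }
      assert (T2 : forall B', (forall z, V2 z -> B' z -> False) ->
                WinI (fun _ => True) E (add (fun _ => False) v) B' true).
      { intros B' HB. refine (proj1 (sub_board (fun _ : V => True) E (fun _ _ => I) _ hE2 H2 _ _ _ _)).
        - intros e He; apply hE; auto.
        - intros z _ ->; right; auto.
        - exact HB. }
      apply Wmak with v; [split; [exact I|split; auto]|].
      destruct (classic (exists y, freeV (fun _ => True) (add (fun _ => False) v) (fun _ => False) y))
        as [Ex|Nex].
      * apply Wbrk; auto. intros y [_ [Hy _]].
        assert (yv : y <> v) by (intro; apply Hy; right; auto).
        destruct (classic (V2 y)) as [V2y|NV2y].
        -- apply T1. intros z V1z [[]| ->]. apply yv, hcap; auto.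
        -- apply T2. intros z V2z [[]| ->]. contradiction.
      * apply Wwon. eapply full_won; [apply (T1 (fun _ => False)); auto|].
        intros x Fx; apply Nex; eauto.
Qed.
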